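(* Assume (A2) and (A3). For every $\delta>0$, on the event $\{20\bar\Delta_{\widehat g}\le\delta\}$, $$\widehat R_x(\delta)\le C\,\widehat R(\delta)+C\sqrt{\frac{\bar\Delta_{\widehat g}}n},$$ where $C>0$ is an absolute constant. (The statement holds for every realization of $X_1,\dots,X_n,Z_1,\dots,Z_n$.)
   Context: $\mathcal Z\subseteq\mathbb R^r$; $Z$ random in $\mathcal Z$ with law $\rho$; $K$ kernel on $\mathcal Z$ with RKHS $\mathcal H_K$, norm $\|\cdot\|_K$, $K_v=K(v,\cdot)$. (A2) $K$ continuous, symmetric, psd, $\sup K\le\kappa^2<\infty$. (A3) $L_Kf=\int K(z,\cdot)f(z)d\rho(z)=\sum_j\mu_j\langle\phi_j,f\rangle_\rho\phi_j$ with nonincreasing $\mu_j\ge0$, $\mu_1>0$, $\{\phi_j\}$ orthonormal basis of $\mathcal L^2(\rho)$. Given $Z_1,\dots,Z_n\in\mathcal Z$, $X_1,\dots,X_n\in\mathcal X$ and a measurable $\widehat g:\mathcal X\to\mathcal Z$, let $\widehat Z_i=\widehat g(X_i)$. $\mathbf K_x$ ($\mathbf K$) is the $n\times n$ matrix with entries $n^{-1}K(\widehat Z_i,\widehat Z_j)$ ($n^{-1}K(Z_i,Z_j)$), with eigenvalues $\widehat\mu_{x,1}\ge\dots\ge\widehat\mu_{x,n}$ ($\widehat\mu_1\ge\dots\ge\widehat\mu_n$); $\widehat R_x(\delta)=(\frac1n\sum_{j=1}^n\min\{\delta,\widehat\mu_{x,j}\})^{1/2}$, $\widehat R(\delta)=(\frac1n\sum_{j=1}^n\min\{\delta,\widehat\mu_j\})^{1/2}$.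 $\Delta_{i,\widehat g}=\|K_{Z_i}-K_{\widehat Z_i}\|_K^2$ and $\bar\Delta_{\widehat g}=\frac1n\sum_{i=1}^n\Delta_{i,\widehat g}$. *)

(* Defs.v *)
From mathcomp Require Import all_boot all_order all_algebra.
From mathcomp Require Import all_classical all_reals all_analysis.
Set Implicit Arguments. Unset Strict Implicit. Unset Printing Implicit Defensive.
Import Order.TTheory GRing.Theory Num.Theory.
Import numFieldNormedType.Exports.
Local Open Scope ring_scope.
Local Open Scope classical_set_scope.

Section Defs.
Variable R : realType.

Definition kernel_A2 (r : nat) (Zs : set 'rV[R]_r)
    (K : 'rV[R]_r -> 'rV[R]_r -> R) (kappa : R) : Prop :=
  [/\ {within Zs `*` Zs, continuous (fun p : 'rV[R]_r * 'rV[R]_r => K p.1 p.2)},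
      (forall u v, Zs u -> Zs v -> K u v = K v u),
      (forall (m : nat) (z : 'I_m -> 'rV[R]_r) (c : 'I_m -> R),
          (forall i, Zs (z i)) ->
          0 <= \sum_(i < m) \sum_(j < m) c i * c j * K (z i) (z j)) &
      (forall u v, Zs u -> Zs v -> K u v <= kappa ^+ 2)].

Definition gram (r n : nat) (K : 'rV[R]_r -> 'rV[R]_r -> R)
    (z : 'I_n -> 'rV[R]_r) : 'M[R]_n :=
  \matrix_(i, j) (n%:R^-1 * K (z i) (z j)).

(* mu is the nonincreasing list of the eigenvalues of A, with multiplicity:
   the characteristic polynomial of A splits as prod_j (X - mu_j). *)
Definition sorted_eigenvalues (n : nat) (A : 'M[R]_n) (mu : 'I_n -> R) : Prop :=
  char_poly A = \prod_(j < n) ('X - (mu j)%:P) /\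
  (forall i j : 'I_n, (i <= j)%N -> mu j <= mu i).

Definition Rhat (n : nat) (mu : 'I_n -> R) (delta : R) : R :=
  Num.sqrt (n%:R^-1 * \sum_(j < n) Num.min delta (mu j)).

(* ||K_u - K_v||_K^2, expanded by the reproducing property
   <K_u, K_v>_K = K(u, v). *)
Definition rkhs_dist2 (r : nat) (K : 'rV[R]_r -> 'rV[R]_r -> R)
    (u v : 'rV[R]_r) : R :=
  K u u - K u v - K v u + K v v.

Definition Delta_bar (r n : nat) (K : 'rV[R]_r -> 'rV[R]_r -> R)
    (z zh : 'I_n -> 'rV[R]_r) : R :=
  n%:R^-1 * \sum_(i < n) rkhs_dist2 K (z i) (zh i).
End Defs.

(* Main.v *)
Require Import Defs.
From mathcomp Require Import all_boot all_order all_algebra.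
From mathcomp Require Import all_classical all_reals all_analysis.
From mathcomp Require Import complex ring lra.
Import Order.TTheory GRing.Theory Num.Theory.
Set Implicit Arguments. Unset Strict Implicit.
Local Open Scope ring_scope.

Lemma logder (F : fieldType) n (a : 'I_n -> F) t :
  \prod_(j < n) (t - a j) != 0 ->
  \sum_(j < n) (t - a j)^-1 =
   (\prod_(j < n) ('X - (a j)%:P))^`().[t] / \prod_(j < n) (t - a j).
Proof.
elim: n a => [|n IH] a.
  by rewrite !big_ord0 derivC horner0 mul0r.
rewrite !big_ord_recr /= => H.
have Hq : \prod_(j < n) (t - a (widen_ord (leqnSn n) j)) != 0.
  by move: H; rewrite mulf_eq0 negb_or => /andP[].
have Hc : t - a ord_max != 0.
  by move: H; rewrite mulf_eq0 negb_or => /andP[].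
rewrite (IH _ Hq) derivM derivXsubC mulr1 hornerD hornerM !hornerXsubC.
have -> : (\prod_(j < n) ('X - (a (widen_ord (leqnSn n) j))%:P)).[t]
   = \prod_(j < n) (t - a (widen_ord (leqnSn n) j)).
  by rewrite horner_prod; apply: eq_bigr => j _; rewrite hornerXsubC.
field; apply/andP; split => //.
Qed.

Lemma char_poly_conjV (F : fieldType) n (P D : 'M[F]_n) : P \in unitmx ->
  char_poly (invmx P *m D *m P) = char_poly D.
Proof.
move=> Pu; rewrite /char_poly /char_poly_mx !map_mxM.
set iP := map_mx polyC (invmx P); set mP := map_mx polyC P.
have H1 : iP *m mP = 1%:M by rewrite /iP /mP -map_mxM mulVmx // map_mx1.
have -> : 'X%:M - iP *m map_mx polyC D *m mP = iP *m ('X%:M - map_mx polyC D) *m mP.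
  rewrite mulmxBr mulmxBl; congr (_ - _).
  by rewrite mul_mx_scalar -scalemxAl H1 -mul_mx_scalar mul1mx.
by rewrite !det_mulmx mulrAC -det_mulmx H1 det1 mul1r.
Qed.

Lemma det_diag_inv (F : fieldType) n (e : 'rV[F]_n) :
  (forall i, e 0 i != 0) ->
  invmx (diag_mx e) = diag_mx (map_mx GRing.inv e).
Proof.
move=> He.
have H : diag_mx (map_mx GRing.inv e) *m diag_mx e = 1%:M.
  apply/matrixP => i j; rewrite mul_diag_mx !mxE.
  by case: (i == j); rewrite ?mulr1n ?mulr0n ?mulr0 ?mulVf.
have Hu : diag_mx e \in unitmx.
  by rewrite unitmxE det_diag unitfE; apply/prodf_neq0 => i _.
by rewrite -[LHS]mul1mx -H mulmxK.
Qed.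

Section T.
Open Scope sesquilinear_scope.
Variable R : realType.
Local Notation C := (complex R).
Local Notation f := (real_complex R).

Lemma conj_real (x : R) : ((f x : C)^*)%R = f x.
Proof.
apply: conj_Creal; rewrite realE.
have [x0|x0] := lerP 0 x.
  by rewrite -(rmorph0 f) !lecR x0.
by rewrite -(rmorph0 f) !lecR (ltW x0) orbT.
Qed.

Lemma Sc_normal n (S : 'M[R]_n) : S^T = S -> map_mx f S \is normalmx.
Proof.
move=> HS; apply/eqP.
have -> : (map_mx f S)^t* = map_mx f S.
  apply/matrixP => i j; rewrite !mxE.
  have := congr1 (fun M : 'M[R]_n => M i j) HS; rewrite mxE => ->.
  exact: conj_real.
by [].
Qed.

Lemma mxtrace_mapf n (A : 'M[R]_n) : \tr (map_mx f A) = f (\tr A).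
Proof. by rewrite /mxtrace rmorph_sum; apply: eq_bigr => i _; rewrite mxE. Qed.

Lemma tr_inv_char n (S : 'M[R]_n) (mu : 'I_n -> R) t :
  S^T = S -> char_poly S = \prod_(j < n) ('X - (mu j)%:P) ->
  (forall j, t != mu j) ->
  (t%:M - S) \in unitmx /\ \tr (invmx (t%:M - S)) = \sum_(j < n) (t - mu j)^-1.
Proof.
move=> HS Hp Ht.
set Sc := map_mx f S.
have /orthomx_spectralP E := Sc_normal HS.
set P := spectralmx Sc in E; set d := spectral_diag Sc in E.
have Pu : P \in unitmx := spectral_unit Sc.
have Hpc : char_poly Sc = \prod_(j < n) ('X - (f (mu j))%:P).
  rewrite -map_char_poly Hp rmorph_prod; apply: eq_bigr => j _.
  exact: map_polyXsubC.
have Hpd : char_poly Sc = \prod_(i < n) ('X - (d 0 i)%:P).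
  rewrite /Sc E char_poly_conjV // char_poly_trig ?diag_mx_is_trig //.
  by apply: eq_bigr => i _; rewrite mxE eqxx mulr1n.
have Hpt : \prod_(j < n) (f t - f (mu j)) != 0.
  apply/prodf_neq0 => j _; rewrite -rmorphB fmorph_eq0 subr_eq0; exact: Ht.
have Hvt : (char_poly Sc).[f t] = \prod_(j < n) (f t - f (mu j)).
  by rewrite Hpc horner_prod; apply: eq_bigr => j _; rewrite hornerXsubC.
have Hvd : (char_poly Sc).[f t] = \prod_(i < n) (f t - d 0 i).
  by rewrite Hpd horner_prod; apply: eq_bigr => i _; rewrite hornerXsubC.
have Hpd0 : \prod_(i < n) (f t - d 0 i) != 0 by rewrite -Hvd Hvt.
have Hsum : \sum_(i < n) (f t - d 0 i)^-1 = \sum_(j < n) (f t - f (mu j))^-1.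
  rewrite (logder Hpd0) (logder Hpt) -Hpd -Hpc -Hvd -Hvt //.
set e := \row_(i < n) (f t - d 0 i).
have He : forall i, e 0 i != 0.
  by move=> i; rewrite mxE; move/prodf_neq0: Hpd0; apply.
have HM : (f t)%:M - Sc = invmx P *m diag_mx e *m P.
  have -> : diag_mx e = (f t)%:M - diag_mx d.
    by apply/matrixP => i j; rewrite !mxE; case: (i == j); rewrite ?mulr1n ?mulr0n ?subr0.
  rewrite mulmxBr mulmxBl -E; congr (_ - _).
  by rewrite mul_mx_scalar -scalemxAl mulVmx // scalemx1.
have Hinv : ((f t)%:M - Sc) *m (invmx P *m invmx (diag_mx e) *m P) = 1%:M.
  have Hdu : diag_mx e \in unitmx.
    by rewrite unitmxE det_diag unitfE; apply/prodf_neq0 => i _.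
  by rewrite HM !mulmxA mulmxK // mulmxK // mulVmx.
have Hmap : map_mx f (t%:M - S) = (f t)%:M - Sc by rewrite map_mxB map_scalar_mx.
have Hu : (t%:M - S) \in unitmx.
  by rewrite -(map_unitmx f) Hmap; case: (mulmx1_unit Hinv).
split => //.
apply: (fmorph_inj f).
apply: etrans (esym (mxtrace_mapf _)) _.
rewrite map_invmx Hmap.
have -> : invmx ((f t)%:M - Sc) = invmx P *m invmx (diag_mx e) *m P.
  by rewrite -[LHS]mulmx1 -Hinv mulKmx // -Hmap map_unitmx.
rewrite mxtrace_mulC mulmxA mulmxV // mul1mx det_diag_inv // mxtrace_diag.
rewrite rmorph_sum.
have -> : \sum_(j < n) f ((t - mu j)^-1) = \sum_(j < n) (f t - f (mu j))^-1.
  by apply: eq_bigr => j _; rewrite fmorphV rmorphB.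
by rewrite -Hsum; apply: eq_bigr => i _; rewrite !mxE.
Qed.
End T.

Section Q.
Variable R : realType.

Definition qf n (S : 'M[R]_n) (c : 'I_n -> R) := \sum_i \sum_j c i * c j * S i j.

Lemma sum2_lin n (F G H : 'I_n -> 'I_n -> R) a b c :
  a * (\sum_i \sum_j F i j) + b * (\sum_i \sum_j G i j) + c * (\sum_i \sum_j H i j)
  = \sum_i \sum_j (a * F i j + b * G i j + c * H i j).
Proof.
rewrite !mulr_sumr -!big_split; apply: eq_bigr => i _.
rewrite !mulr_sumr -!big_split; apply: eq_bigr => j _ //.
Qed.

Lemma sum_delta n (F : 'I_n -> R) i : \sum_b (b == i)%:R * F b = F i.
Proof.
rewrite (bigD1 i) //= eqxx mul1r big1 ?addr0 // => b /negbTE ->; by rewrite mul0r.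
Qed.

Lemma sum_delta2 n (G : 'I_n -> R) i j s t :
  \sum_a (s * (a == i)%:R + t * (a == j)%:R) * G a = s * G i + t * G j.
Proof.
rewrite -(sum_delta G i) -(sum_delta G j) !mulr_sumr -big_split.
by apply: eq_bigr => a _ /=; ring.
Qed.

Lemma qf_pair n (S : 'M[R]_n) i j s t :
  qf S (fun a => s * (a == i)%:R + t * (a == j)%:R) =
  s * s * S i i + s * t * S i j + t * s * S j i + t * t * S j j.
Proof.
rewrite /qf.
have inner : forall a, \sum_b (s * (a == i)%:R + t * (a == j)%:R) *
      (s * (b == i)%:R + t * (b == j)%:R) * S a b =
    (s * (a == i)%:R + t * (a == j)%:R) * (s * S a i + t * S a j).
  move=> a; rewrite -(sum_delta2 (fun b => S a b)) mulr_sumr.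
  by apply: eq_bigr => b _ /=; ring.
rewrite (eq_bigr _ (fun a _ => inner a)) sum_delta2 /=; ring.
Qed.

Lemma qf_delta n (S : 'M[R]_n) i : qf S (fun a => (a == i)%:R) = S i i.
Proof.
have := qf_pair S i i 1 0.
rewrite /qf => H.
rewrite -[RHS](_ : 1 * 1 * S i i + 1 * 0 * S i i + 0 * 1 * S i i + 0 * 0 * S i i = S i i);
  last by ring.
rewrite -H; apply: eq_bigr => a _; apply: eq_bigr => b _; ring.
Qed.

Lemma qf_par n (S : 'M[R]_n) x y :
  qf S (fun a => x a - y a) + qf S (fun a => x a + y a) = 2 * qf S x + 2 * qf S y.
Proof.
rewrite /qf !mulr_sumr -!big_split; apply: eq_bigr => i _.
rewrite !mulr_sumr -!big_split; apply: eq_bigr => j _ /=; ring.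
Qed.

Lemma sum2_split4 n (F G H I : 'I_n -> 'I_n -> R) :
  \sum_i \sum_j (F i j + G i j + H i j + I i j) =
  \sum_i \sum_j F i j + \sum_i \sum_j G i j + \sum_i \sum_j H i j + \sum_i \sum_j I i j.
Proof.
rewrite -!big_split; apply: eq_bigr => i _ /=; rewrite -!big_split //.
Qed.

Lemma qf_cs n (S : 'M[R]_n) w : (forall c, 0 <= qf S c) ->
  qf S w <= (\sum_i w i ^+ 2) * \tr S.
Proof.
move=> Hp.
have H : 0 <= \sum_i \sum_j qf S (fun a => w j * (a == i)%:R + (- w i) * (a == j)%:R).
  by apply: sumr_ge0 => i _; apply: sumr_ge0 => j _.
rewrite (eq_bigr _ (fun i _ => eq_bigr _ (fun j _ => qf_pair S i j _ _))) in H.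
rewrite sum2_split4 in H.
have e1 : \sum_i \sum_j w j * w j * S i i = (\sum_i w i ^+ 2) * \tr S.
  rewrite /mxtrace mulr_sumr; apply: eq_bigr => i _; rewrite mulr_suml.
  by apply: eq_bigr => j _; rewrite expr2.
have e2 : \sum_i \sum_j (- w i) * (- w i) * S j j = (\sum_i w i ^+ 2) * \tr S.
  rewrite exchange_big /= -e1; apply: eq_bigr => i _; apply: eq_bigr => j _.
  by rewrite mulrNN.
have e3 : \sum_i \sum_j w j * (- w i) * S i j = - qf S w.
  rewrite /qf -sumrN; apply: eq_bigr => i _; rewrite -sumrN; apply: eq_bigr => j _.
  by rewrite mulrN mulNr (mulrC (w j)).
have e4 : \sum_i \sum_j (- w i) * w j * S j i = - qf S w.
  rewrite exchange_big /= /qf -sumrN; apply: eq_bigr => i _; rewrite -sumrN; apply: eq_bigr => j _.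
  ring.
rewrite e1 e2 e3 e4 in H.
lra.
Qed.
Lemma qf_mx n (F : 'I_n -> 'I_n -> R) c :
  qf (\matrix_(i, j) F i j) c = \sum_i \sum_j c i * c j * F i j.
Proof. by apply: eq_bigr => i _; apply: eq_bigr => j _; rewrite mxE. Qed.

Section Kern.
Variables (r n : nat) (Zs : set 'rV[R]_r) (K : 'rV[R]_r -> 'rV[R]_r -> R)
  (Z Zh : 'I_n -> 'rV[R]_r).
Hypothesis Hpsd : forall (m : nat) (z : 'I_m -> 'rV[R]_r) (c : 'I_m -> R),
  (forall i, Zs (z i)) -> 0 <= \sum_(i < m) \sum_(j < m) c i * c j * K (z i) (z j).
Hypothesis HZ : forall i, Zs (Z i).
Hypothesis HZh : forall i, Zs (Zh i).

Definition P2 (a b : 'I_n -> R) := \sum_i \sum_j (a i * a j * K (Z i) (Z j)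
  + a i * b j * K (Z i) (Zh j) + b i * a j * K (Zh i) (Z j) + b i * b j * K (Zh i) (Zh j)).

Lemma psd2 a b : 0 <= P2 a b.
Proof.
pose z := fun k : 'I_(n + n) => match fintype.split k with inl i => Z i | inr i => Zh i end.
pose c := fun k : 'I_(n + n) => match fintype.split k with inl i => a i | inr i => b i end.
have Hz : forall k, Zs (z k) by move=> k; rewrite /z; case: (fintype.split k).
have := Hpsd c Hz.
have sl : forall i : 'I_n, fintype.split (lshift n i) = inl i := fun i => unsplitK (inl i).
have sr : forall i : 'I_n, fintype.split (rshift n i) = inr i := fun i => unsplitK (inr i).
move=> H; apply: (le_trans H); rewrite le_eqVlt; apply/orP; left; apply/eqP.
rewrite big_split_ord /=.
have inner : forall k : 'I_(n + n), \sum_(l < n + n) c k * c l * K (z k) (z l) =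
   \sum_(l < n) c k * c (lshift n l) * K (z k) (z (lshift n l)) +
   \sum_(l < n) c k * c (rshift n l) * K (z k) (z (rshift n l)).
  by move=> k; rewrite big_split_ord.
under eq_bigr do rewrite inner.
under [X in _ + X = _]eq_bigr do rewrite inner.
rewrite /z /c /= !big_split /= /P2 sum2_split4 !addrA.
by congr (_ + _ + _ + _); apply: eq_bigr => i _; apply: eq_bigr => l _; rewrite ?sl ?sr.
Qed.


Lemma sum2_scale n0 (F : 'I_n0 -> 'I_n0 -> R) s :
  s * (\sum_i \sum_j F i j) = \sum_i \sum_j s * F i j.
Proof. rewrite mulr_sumr; apply: eq_bigr => i _; by rewrite mulr_sumr. Qed.

Definition Em := \matrix_(i, j) (n%:R^-1 * (K (Z i) (Z j) - K (Z i) (Zh j)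
   - K (Zh i) (Z j) + K (Zh i) (Zh j))) : 'M[R]_n.

Lemma qf_gram (z : 'I_n -> 'rV[R]_r) c :
  qf (gram K z) c = n%:R^-1 * \sum_i \sum_j c i * c j * K (z i) (z j).
Proof.
rewrite /gram qf_mx mulr_sumr; apply: eq_bigr => i _; rewrite mulr_sumr.
by apply: eq_bigr => j _ /=; ring.
Qed.

Lemma qf_gram_ge0 (z : 'I_n -> 'rV[R]_r) c : (forall i, Zs (z i)) -> 0 <= qf (gram K z) c.
Proof. by move=> Hz; rewrite qf_gram; apply: mulr_ge0; [rewrite invr_ge0|apply: Hpsd]. Qed.

Lemma qfE_ge0 c : 0 <= qf Em c.
Proof.
have -> : qf Em c = n%:R^-1 * P2 c (fun i => - c i).
  rewrite /Em qf_mx /P2 mulr_sumr; apply: eq_bigr => i _; rewrite mulr_sumr.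
  by apply: eq_bigr => j _ /=; ring.
by apply: mulr_ge0; [rewrite invr_ge0|apply: psd2].
Qed.

Lemma qfB_le c : qf (gram K Zh) c <= 2 * qf (gram K Z) c + 2 * qf Em c.
Proof.
have H : 2 * qf (gram K Z) c + 2 * qf Em c - qf (gram K Zh) c
   = n%:R^-1 * P2 (fun i => 2 * c i) (fun i => - c i).
  rewrite /Em qf_mx !qf_gram /P2 !sum2_scale -big_split -sumrB /=.
  apply: eq_bigr => i _; rewrite -big_split -sumrB /=.
  by apply: eq_bigr => j _ /=; rewrite ?mxE; ring.
have : 0 <= n%:R^-1 * P2 (fun i => 2 * c i) (fun i => - c i).
  by apply: mulr_ge0; [rewrite invr_ge0|apply: psd2].
rewrite -H; lra.
Qed.

Lemma trEm : \tr Em = Delta_bar K Z Zh.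
Proof.
rewrite /mxtrace /Delta_bar mulr_sumr; apply: eq_bigr => i _.
by rewrite mxE /rkhs_dist2.
Qed.

Lemma trEm_ge0 : 0 <= \tr Em.
Proof.
rewrite /mxtrace; apply: sumr_ge0 => i _; rewrite -qf_delta; exact: qfE_ge0.
Qed.
End Kern.
Section Ridge.
Variables (n : nat) (dl : R).

Definition J (S V : 'M[R]_n) :=
  \tr (V *m S *m V^T) + dl * \tr ((1%:M - V) *m (1%:M - V)^T).

Lemma ridge_ident (S V : 'M[R]_n) : S^T = S -> (S + dl%:M) \in unitmx ->
  J S V = dl * n%:R - dl ^+ 2 * \tr (invmx (S + dl%:M))
   + \tr ((V - dl *: invmx (S + dl%:M)) *m (S + dl%:M) *m (V - dl *: invmx (S + dl%:M))^T).
Proof.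
move=> HS Hu.
set T := S + dl%:M; set U := invmx T.
have HT : T^T = T by rewrite /T linearD /= HS tr_scalar_mx.
have HU : U^T = U by rewrite /U trmx_inv HT.
have h1 : \tr ((1%:M - V) *m (1%:M - V)^T) = n%:R - 2 * \tr V + \tr (V *m V^T).
  rewrite linearB /= trmx1 mulmxBl mulmxBr mulmxBr !mul1mx mulmx1.
  rewrite !raddfB /= mxtrace_tr mxtrace1; ring.
have h2 : \tr ((V - dl *: U) *m T *m (V - dl *: U)^T) =
   \tr (V *m S *m V^T) + dl * \tr (V *m V^T) - 2 * dl * \tr V + dl ^+ 2 * \tr U.
  have HW : (V - dl *: U)^T = V^T - dl *: U by rewrite -[in RHS]HU; apply/matrixP => i j; rewrite !mxE.
  rewrite HW mulmxBl -scalemxAl mulVmx // scalemx1.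
  rewrite mulmxBl mulmxBr mulmxBr -!scalemxAr -(mulmxA V T U) mulmxV // mulmx1 !mul_scalar_mx scalerA.

  rewrite /T mulmxDr mulmxDl mul_mx_scalar -scalemxAl.
  rewrite !raddfB /= !raddfD /= !mxtraceZ mxtrace_tr; ring.
rewrite /J h1 h2 /U /T; ring.
Qed.

Lemma tr_quad (S V : 'M[R]_n) : \tr (V *m S *m V^T) = \sum_k qf S (fun i => V k i).
Proof.
rewrite /mxtrace; apply: eq_bigr => k _; rewrite /qf mxE exchange_big /=.
apply: eq_bigr => i _; rewrite mxE mulr_suml; apply: eq_bigr => j _.
by rewrite !mxE; ring.
Qed.

Lemma qf_scalar (a : R) (c : 'I_n -> R) : qf (a%:M : 'M[R]_n) c = a * \sum_i c i ^+ 2.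
Proof.
rewrite /qf mulr_sumr; apply: eq_bigr => i _.
rewrite (bigD1 i) //= big1 ?addr0 => [|j /negbTE Hj]; rewrite !mxE.
  by rewrite eqxx mulr1n; ring.
by rewrite eq_sym Hj mulr0n mulr0.
Qed.

Lemma qf_add (S1 S2 : 'M[R]_n) c : qf (S1 + S2) c = qf S1 c + qf S2 c.
Proof.
rewrite /qf -big_split; apply: eq_bigr => i _; rewrite -big_split.
by apply: eq_bigr => j _; rewrite mxE /=; ring.
Qed.

Lemma ridge_lower (S V : 'M[R]_n) : S^T = S -> (forall c, 0 <= qf S c) -> 0 < dl ->
  (S + dl%:M) \in unitmx ->
  dl * n%:R - dl ^+ 2 * \tr (invmx (S + dl%:M)) <= J S V.
Proof.
move=> HS Hp Hd Hu; rewrite ridge_ident // lerDl tr_quad.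
apply: sumr_ge0 => k _; rewrite qf_add qf_scalar.
apply: addr_ge0 => //; apply: mulr_ge0; first exact: ltW.
by apply: sumr_ge0 => i _; apply: sqr_ge0.
Qed.

Lemma ridge_eq (S : 'M[R]_n) : S^T = S -> (S + dl%:M) \in unitmx ->
  J S (dl *: invmx (S + dl%:M)) = dl * n%:R - dl ^+ 2 * \tr (invmx (S + dl%:M)).
Proof.
move=> HS Hu; rewrite ridge_ident // subrr !mul0mx mxtrace0 addr0 //.
Qed.

Lemma perturb (A B E V : 'M[R]_n) :
  (forall c, 0 <= qf A c) -> (forall c, 0 <= qf E c) ->
  (forall c, qf B c <= 2 * qf A c + 2 * qf E c) ->
  4 * \tr E <= dl -> J B V <= 2 * J A V + 4 * \tr E.
Proof.
move=> hA hE hB hd.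
set X := 1%:M - V.
have hV : forall k i, V k i = (i == k)%:R - X k i.
  by move=> k i; rewrite !mxE eq_sym; ring.
have hs : \tr (X *m X^T) = \sum_k \sum_i X k i ^+ 2.
  rewrite -[X in \tr (X *m _)]mulmx1 tr_quad; apply: eq_bigr => k _.
  by rewrite qf_scalar mul1r.
have hs0 : 0 <= \sum_k \sum_i X k i ^+ 2.
  by apply: sumr_ge0 => k _; apply: sumr_ge0 => i _; apply: sqr_ge0.
have key : forall k, qf B (fun i => V k i) <=
    2 * qf A (fun i => V k i) + 4 * E k k + 4 * ((\sum_i X k i ^+ 2) * \tr E).
  move=> k.
  have h1 := hB (fun i => V k i).
  have h2 := qf_par E (fun i => (i == k)%:R) (fun i => X k i).
  have h3 := hE (fun a => (a == k)%:R + X k a).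
  have h4 := qf_cs (fun i => X k i) hE.
  have -> : (fun i => V k i) = (fun a => (a == k)%:R - X k a).
    by apply: funext => i; rewrite hV.
  rewrite qf_delta in h2.
  move: h1; rewrite (_ : (fun i => V k i) = (fun a => (a == k)%:R - X k a)).
    lra.
  by apply: funext => i; rewrite hV.
rewrite /J !tr_quad hs.
have sB : \sum_k qf B (fun i => V k i) <= \sum_k (2 * qf A (fun i => V k i) + 4 * E k k
     + 4 * ((\sum_i X k i ^+ 2) * \tr E)).
  by apply: ler_sum => k _; apply: key.
rewrite !big_split /= -!mulr_sumr -mulr_suml in sB.
have trE : \sum_k E k k = \tr E by [].
rewrite trE in sB.
set s := \sum_k \sum_i X k i ^+ 2 in hs0 sB *.
have hh : 4 * \tr E * s <= dl * s by apply: ler_wpM2r.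
move: sB hh; set a := \sum_k qf B _; set b := \sum_k qf A _.
move=> sB hh; nra.
Qed.
End Ridge.


Lemma eig_ge0 n (S : 'M[R]_n) (mu : 'I_n -> R) : (forall c, 0 <= qf S c) ->
  char_poly S = \prod_(j < n) ('X - (mu j)%:P) -> forall j, 0 <= mu j.
Proof.
move=> Hp Hc j.
have : eigenvalue S (mu j).
  rewrite eigenvalue_root_char Hc; apply/rootP.
  by rewrite horner_prod (bigD1 j) //= hornerXsubC subrr mul0r.
case/eigenvalueP => v Hv Hv0.
have Hq : qf S (fun i => v 0 i) = mu j * \sum_i v 0 i ^+ 2.
  rewrite /qf exchange_big /= mulr_sumr; apply: eq_bigr => k _.
  have := congr1 (fun M : 'M[R]_(1, n) => M 0 k) Hv; rewrite !mxE => Hk.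
  transitivity (v 0 k * \sum_i v 0 i * S i k); last by rewrite Hk expr2; ring.
  by rewrite mulr_sumr; apply: eq_bigr => i _ /=; ring.
have Hs : 0 < \sum_i v 0 i ^+ 2.
  rewrite lt_def sumr_ge0 ?andbT => [|i _]; last exact: sqr_ge0.
  apply: contra Hv0 => /eqP H0; apply/eqP/matrixP => a i; rewrite ord1 mxE.
  have := @psumr_eq0P _ _ _ (fun i => v 0 i ^+ 2) (fun i _ => sqr_ge0 (v 0 i)) H0 i isT.
  by move/eqP; rewrite sqrf_eq0 => /eqP.
by rewrite -(pmulr_lge0 _ Hs) -Hq.
Qed.

Lemma tr_inv_plus n (S : 'M[R]_n) (mu : 'I_n -> R) dl :
  S^T = S -> char_poly S = \prod_(j < n) ('X - (mu j)%:P) ->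
  (forall j, 0 <= mu j) -> 0 < dl ->
  (S + dl%:M) \in unitmx /\ \tr (invmx (S + dl%:M)) = \sum_(j < n) (mu j + dl)^-1.
Proof.
move=> HS Hc Hmu Hd.
have Ht : forall j, - dl != mu j.
  move=> j; apply/eqP => E; have := Hmu j; rewrite -E oppr_ge0; lra.
have [Hu Htr] := tr_inv_char HS Hc Ht.
have E : S + dl%:M = (-1) *: ((- dl)%:M - S).
  by apply/matrixP => i k; rewrite !mxE; case: (i == k); rewrite ?mulr1n ?mulr0n /=; ring.
have Hn1 : (-1 : R) \is a GRing.unit by rewrite unitrN1.
have HU : S + dl%:M \in unitmx by rewrite E unitmxZ.
split => //.
rewrite E invmxZ -?E // mxtraceZ Htr invrN1 mulr_sumr; apply: eq_bigr => j _.
by rewrite mulN1r -invrN opprB opprK addrC.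
Qed.

Lemma min_h (dl mu : R) : 0 < dl -> 0 <= mu ->
  dl - dl ^+ 2 * (mu + dl)^-1 <= Num.min dl mu /\
  Num.min dl mu <= 2 * (dl - dl ^+ 2 * (mu + dl)^-1).
Proof.
move=> Hd Hm.
have Hp : 0 < mu + dl by lra.
set q := (mu + dl)^-1.
have Hq : q * (mu + dl) = 1 by rewrite mulVf // gt_eqF.
have Hq0 : 0 < q by rewrite invr_gt0.
rewrite /Num.min; case: ltP => h; split; nra.
Qed.

Lemma sqrt_comb (a b : R) : 0 <= a -> 0 <= b ->
  Num.sqrt (4 * a + 8 * b) <= 3 * Num.sqrt a + 3 * Num.sqrt b.
Proof.
move=> Ha Hb.
have sa := sqrtr_ge0 a; have sb := sqrtr_ge0 b.
have ea := sqr_sqrtr Ha; have eb := sqr_sqrtr Hb.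
rewrite -[X in _ <= X]ger0_norm; last lra.
rewrite -sqrtr_sqr; apply: ler_wsqrtr.
have sab := mulr_ge0 sa sb.
move: sa sb ea eb sab; set x := Num.sqrt a; set y := Num.sqrt b => sa sb ea eb sab.
rewrite -ea -eb in Ha Hb *; nra.
Qed.

End Q.

Lemma sum_F (R : realType) n (mu : 'I_n -> R) dl :
  dl * n%:R - dl ^+ 2 * \sum_(j < n) (mu j + dl)^-1 =
  \sum_(j < n) (dl - dl ^+ 2 * (mu j + dl)^-1).
Proof.
rewrite sumrB -mulr_sumr sumr_const card_ord mulr_natr //.
Qed.

Lemma gram_sym (R : realType) r n (Zs : set 'rV[R]_r) K (z : 'I_n -> 'rV[R]_r) :
  (forall u v, Zs u -> Zs v -> K u v = K v u) -> (forall i, Zs (z i)) ->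
  (gram K z)^T = gram K z.
Proof. by move=> Hs Hz; apply/matrixP => i j; rewrite !mxE Hs. Qed.

Unset Implicit Arguments.
Import numFieldNormedType.Exports.
Local Open Scope classical_set_scope.

Theorem lemma11 :
  exists C : nat, (0 < C)%N /\
  forall (R : realType) (r : nat) (Zs : set 'rV[R]_r)
    (K : 'rV[R]_r -> 'rV[R]_r -> R) (kappa : R)
    (Xt : Type) (n : nat)
    (Z : 'I_n -> 'rV[R]_r) (X : 'I_n -> Xt) (g : Xt -> 'rV[R]_r)
    (mu mux : 'I_n -> R) (delta : R),
    kernel_A2 Zs K kappa ->
    (0 < n)%N ->
    (forall i, Zs (Z i)) ->
    (forall x, Zs (g x)) ->
    sorted_eigenvalues (gram K Z) mu ->
    sorted_eigenvalues (gram K (fun i => g (X i))) mux ->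
    0 < delta ->
    20 * Delta_bar K Z (fun i => g (X i)) <= delta ->
    Rhat mux delta <=
      C%:R * Rhat mu delta
      + C%:R * Num.sqrt (Delta_bar K Z (fun i => g (X i)) / n%:R).
Proof.
exists 3%N; split => // R r Zs K kappa Xt n Z X g mu mux delta
  [_ Hsym Hpsd _] Hn HZ Hg [Hmu _] [Hmux _] Hd HD.
set Zh := fun i => g (X i) in HD Hmux *.
have HZh : forall i, Zs (Zh i) by move=> i; exact: Hg.
have hA : forall c, 0 <= qf (gram K Z) c := fun c => qf_gram_ge0 Hpsd c HZ.
have hB : forall c, 0 <= qf (gram K Zh) c := fun c => qf_gram_ge0 Hpsd c HZh.
have hE := qfE_ge0 Hpsd HZ HZh.
have hBle := qfB_le Hpsd HZ HZh.
have symA := gram_sym Hsym HZ.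
have symB := gram_sym Hsym HZh.
have Hmu0 := eig_ge0 hA Hmu.
have Hmux0 := eig_ge0 hB Hmux.
have [uA trA] := tr_inv_plus symA Hmu Hmu0 Hd.
have [uB trB] := tr_inv_plus symB Hmux Hmux0 Hd.
have trE := trEm K Z Zh.
have trE0 := trEm_ge0 Hpsd HZ HZh.
rewrite trE in trE0.
have h4 : 4 * \tr (Em K Z Zh) <= delta by rewrite trE; lra.
have chain := le_trans (ridge_lower (delta *: invmx (gram K Z + delta%:M)) symB hB Hd uB)
   (perturb (delta *: invmx (gram K Z + delta%:M)) hA hE hBle h4).
rewrite ridge_eq // trA trB trE !sum_F in chain.
set SA := \sum_(j < n) Num.min delta (mu j).
set SB := \sum_(j < n) Num.min delta (mux j).
have hSB : SB <= 2 * \sum_(j < n) (delta - delta ^+ 2 * (mux j + delta)^-1).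
  rewrite mulr_sumr; apply: ler_sum => j _; exact: (min_h Hd (Hmux0 j)).2.
have hSA : \sum_(j < n) (delta - delta ^+ 2 * (mu j + delta)^-1) <= SA.
  apply: ler_sum => j _; exact: (min_h Hd (Hmu0 j)).1.
have SA0 : 0 <= SA.
  apply: sumr_ge0 => j _; rewrite /Num.min; case: ifP => _; [exact: ltW|exact: Hmu0].
set D := Delta_bar K Z Zh in trE0 HD chain *.
have key : SB <= 4 * SA + 8 * D by lra.
have ninv : 0 < n%:R^-1 :> R by rewrite invr_gt0 ltr0n.
rewrite /Rhat -/SA -/SB.
apply: le_trans (sqrt_comb (mulr_ge0 (ltW ninv) SA0) (divr_ge0 trE0 (ler0n _ n))).
apply: ler_wsqrtr.
have -> : 4 * (n%:R^-1 * SA) + 8 * (D / n%:R) = n%:R^-1 * (4 * SA + 8 * D) by ring.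
by apply: ler_wpM2l; [exact: ltW|exact: key].
Qed.
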